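(* Let $P$ be an $n\times n$ integer matrix which is anticommutative, i.e. $P^{T}\,\overline I\,P\cong\overline I$, where $\overline I=J-I$ and $J$ is the all-ones $n\times n$ matrix. Let $m$ be the number of columns of $P$ with odd entry sum and $k=n-m$ (equivalently, after a simultaneous permutation of rows and columns, $P^TP\cong\begin{bmatrix} I_m & J\\ J & \overline I_k\end{bmatrix}$). Then, unless $m$ is even and $k$ is odd, $P$ is dyadically invertible.
   Context: For integer matrices, $A\cong B$ means $A\equiv B\pmod 2$ entrywise. A square integer matrix $P$ is dyadically invertible if there is an integer matrix $A$ with $AP\cong I$. $J$ denotes a block of all ones of the appropriate size and $\overline I_k=J_{k\times k}-I_k$. *)

(* Defs.v *)
From mathcomp Require Import all_boot all_order all_algebra.
Set Implicit Arguments. Unset Strict Implicit. Unset Printing Implicit Defensive.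
Import GRing.Theory Num.Theory.
Local Open Scope ring_scope.

Definition cong2 (r c : nat) (A B : 'M[int]_(r, c)) : Prop :=
  forall i j, (A i j = B i j %[mod 2])%Z.

Definition Ibar (n : nat) : 'M[int]_n := const_mx 1 - 1%:M.

Definition anticommutative (n : nat) (P : 'M[int]_n) : Prop :=
  cong2 (P^T *m Ibar n *m P) (Ibar n).

Definition dyadically_invertible (n : nat) (P : 'M[int]_n) : Prop :=
  exists A : 'M[int]_n, cong2 (A *m P) 1%:M.

Definition odd_cols (n : nat) (P : 'M[int]_n) : nat :=
  #|[set j : 'I_n | ~~ (2 %| \sum_(i < n) P i j)%Z]|.

(* Main.v *)
Require Import Defs.
From mathcomp Require Import all_boot all_order all_algebra.
From mathcomp Require Import zify ring.
Import GRing.Theory Num.Theory.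
Local Open Scope ring_scope.

Lemma F2_cases (x : 'F_2) : x = 0 \/ x = 1.
Proof. by case: x => [[|[|i]]] Hi //; [left|right]; apply/val_inj. Qed.

Lemma intr_F2 (a : int) : (a%:~R : 'F_2) = ((a %% 2)%Z)%:~R.
Proof.
rewrite {1}(divz_eq a 2) intrD intrM.
have ->: ((2:int)%:~R : 'F_2) = 0 by apply/val_inj.
by rewrite mulr0 add0r.
Qed.

Lemma cong2F (a b : int) : (a = b %[mod 2])%Z <-> (a%:~R : 'F_2) = b%:~R.
Proof.
rewrite intr_F2 (intr_F2 b); split; first by move->.
have : (a %% 2 = 0 \/ a %% 2 = 1)%Z by lia.
have : (b %% 2 = 0 \/ b %% 2 = 1)%Z by lia.
by case=> -> [] -> // /eqP.
Qed.

Lemma intr_F2_0 (c : int) : ((c%:~R : 'F_2) = 0) <-> (2 %| c)%Z.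
Proof.
rewrite intr_F2; apply: (iff_trans _ (rwP dvdz_mod0P)).
have : (c %% 2 = 0 \/ c %% 2 = 1)%Z by lia.
by case=> ->; split => // /eqP.
Qed.

Lemma cong2E n (A B : 'M[int]_n) :
  cong2 A B <-> map_mx (intr : int -> 'F_2) A = map_mx intr B.
Proof.
split.
  by move=> H; apply/matrixP => i j; rewrite !mxE; apply/cong2F.
by move=> /matrixP E i j; apply/cong2F; have := E i j; rewrite !mxE.
Qed.


Lemma natr_F2 (n : nat) : (n%:R : 'F_2) = (odd n)%:R.
Proof. elim: n => // n IH; rewrite mulrS IH /=; case: (odd n) => /=; [exact/eqP|exact: addr0]. Qed.

Lemma sqr_F2 (x : 'F_2) : x * x = x.
Proof. by case: (F2_cases x) => ->; rewrite ?mulr0 ?mulr1. Qed.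

Theorem proposition3p6 (n : nat) (P : 'M[int]_n) :
  anticommutative P ->
  let m := odd_cols P in
  let k := (n - m)%N in
  ~~ (~~ odd m && odd k) ->
  dyadically_invertible P.
Proof.
move=> HA m k Hmk.
pose Q : 'M['F_2]_n := map_mx intr P.
have HQ : Q^T *m (const_mx 1 - 1%:M) *m Q = const_mx 1 - 1%:M.
  have EI : map_mx intr (Ibar n) = const_mx 1 - 1%:M :> 'M['F_2]_n.
    by apply/matrixP => i j; rewrite !mxE rmorphB rmorph1 rmorph_nat.
  by move/cong2E: HA; rewrite !map_mxM map_trmx EI.
pose s j := \sum_i Q i j.
have HM : forall i j, (Q^T *m Q) i j = s i * s j - (1 - (i == j)%:R).
  move=> i j.
  have -> : Q^T *m Q = Q^T *m const_mx 1 *m Q - (const_mx 1 - 1%:M).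
    by rewrite -[X in _ - X]HQ mulmxBr mulmxBl mulmx1 opprB addrC subrK.
  rewrite !mxE; congr (_ - _).
  rewrite /s mulr_sumr; apply: eq_bigr => l _; rewrite !mxE.
  congr (_ * _); apply: eq_bigr => t _; by rewrite !mxE mulr1.
have UM : Q^T *m Q \in unitmx.
  rewrite -row_free_unit -kermx_eq0; apply/eqP/row_matrixP => r; rewrite row0.
  set v := row r (kermx (Q^T *m Q)).
  have Hv : v *m (Q^T *m Q) = 0 by rewrite /v -row_mul mulmx_ker row0.
  clearbody v.
  pose a := \sum_j v 0 j; pose b := \sum_j v 0 j * s j.
  have Ev : forall j, v 0 j = a - b * s j.
    move=> j; have := congr1 (fun M : 'rV['F_2]_n => M 0 j) Hv; rewrite /= [in X in X = _ -> _]mxE [in X in _ = X -> _]mxE.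
    rewrite (eq_bigr (fun i => v 0 i * s i * s j - v 0 i + v 0 i * (i == j)%:R)); last first.
      by move=> i _; rewrite HM; ring.
    rewrite !big_split /= -!mulr_suml sumrN [\sum_(i < n) v 0 i * (i == j)%:R](bigD1 j) //= eqxx mulr1 [X in v 0 j + X]big1 ?addr0; last first.
      by move=> i /negPf ->; rewrite mulr0.
    move=> H; rewrite -[v 0 j]subr0 -H. rewrite /a /b; ring.
  have Hs : forall j, (s j = 0) <-> (2 %| \sum_i P i j)%Z.
    move=> j; have -> : s j = (\sum_i P i j)%:~R.
      by rewrite rmorph_sum; apply: eq_bigr => i _; rewrite mxE.
    exact: intr_F2_0.
  pose m' := \sum_j s j.
  have Hm' : m' = (odd m)%:R.
    rewrite -natr_F2 /m /odd_cols -sum1_card natr_sum big_mkcond /=; apply: eq_bigr => j _.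
    rewrite inE; case: (F2_cases (s j)) => E.
      by rewrite E (proj1 (Hs j) E).
    have -> : ~~ (2 %| \sum_i P i j)%Z by apply/negP => /Hs; rewrite E.
    by rewrite E.
  have Ha : a = n%:R * a - b * m'.
    rewrite {1}/a (eq_bigr _ (fun j _ => Ev j)) sumrB sumr_const card_ord -mulr_sumr mulr_natl.
    by [].
  have Hb : b = a * m' - b * m'.
    rewrite {1}/b (eq_bigr (fun j => a * s j - b * s j)); last first.
      by move=> j _; rewrite Ev mulrBl -mulrA sqr_F2.
    by rewrite sumrB -!mulr_sumr.
  have hmn : (m <= n)%N.
    by rewrite /m /odd_cols; apply: leq_trans (max_card _) _; rewrite card_ord.
  move: Hmk; rewrite /k oddB // => Hmk.
  have [a0 b0] : a = 0 /\ b = 0.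
    clearbody a b m'.
    move: Ha Hb Hmk; rewrite Hm' (natr_F2 n).
    case: (odd n); case: (odd m); case: (F2_cases a) => ->; case: (F2_cases b) => -> //=;
      move=> /eqP H1 /eqP H2 H3.
  all: try by [] || (exfalso; first [discriminate H1 | discriminate H2 | discriminate H3]).
  by apply/rowP => j; rewrite Ev a0 b0 mxE mul0r subr0.
have UQ : Q \in unitmx by move: UM; rewrite unitmx_mul unitmx_tr => /andP[].
exists (map_mx (fun x : 'F_2 => (x : nat)%:Z) (invmx Q)).
apply/cong2E; rewrite map_mxM.
have -> : map_mx intr (map_mx (fun x : 'F_2 => (x : nat)%:Z) (invmx Q)) = invmx Q.
  by apply/matrixP => i j; rewrite !mxE; exact: natr_Zp.
rewrite mulVmx //; apply/matrixP => i j; rewrite !mxE.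
by case: (i == j).
Qed.
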